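(* For all $n\ge 1$, \[\left|\mathrm{Av}_n[\overline{123},\overline{321}]\right|=\begin{cases}1 & n=1,\\ 0 & n\ge 3 \text{ odd},\\ U_{n-1} & n\ge 2\text{ even},\end{cases}\] where $U_m$ is the number of up-down permutations of length $m$.
   Context: For $\sigma\in S_n$, the cyclic permutation $[\sigma]$ is the set of all rotations of $\sigma$; $[S_n]$ is the set of cyclic permutations of length $n$. A vincular pattern is a permutation $\pi\in S_k$ with some pairs of adjacent positions joined by an overline; a linear permutation $\tau$ contains it if $\tau$ has a subsequence order-isomorphic to $\pi$ whose entries corresponding to overlined adjacent positions are adjacent in $\tau$. $[\sigma]$ contains $[\pi]$ if some rotation of $\sigma$ contains $\pi$. $\mathrm{Av}_n[\overline{123},\overline{321}]$ is the set of $[\sigma]\in[S_n]$ avoiding both $[\overline{123}]$ and $[\overline{321}]$ (i.e. with no three cyclically consecutive entries increasing or decreasing). An up-down permutation of length $m$ is $\sigma\in S_m$ with $\sigma_1<\sigma_2>\sigma_3<\sigma_4>\cdots$. *)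

(* Defs.v *)
From mathcomp Require Import all_boot all_order all_fingroup.
Set Implicit Arguments. Unset Strict Implicit. Unset Printing Implicit Defensive.

(* One-line notation of a permutation sigma in S_n (values 0..n-1,
   order-isomorphic to the usual 1..n convention). *)
Definition pseq (n : nat) (s : 'S_n) : seq nat := [seq val (s i) | i <- enum 'I_n].

(* Linear containment of the vincular pattern 123-bar (all three entries
   adjacent): three consecutive increasing entries. *)
Definition has_consec_inc (s : seq nat) : bool :=
  has (fun j => (nth 0 s j < nth 0 s j.+1) && (nth 0 s j.+1 < nth 0 s j.+2))
      (iota 0 (size s - 2)).

Definition has_consec_dec (s : seq nat) : bool :=
  has (fun j => (nth 0 s j > nth 0 s j.+1) && (nth 0 s j.+1 > nth 0 s j.+2))
      (iota 0 (size s - 2)).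

Definition cyc_class (n : nat) (s : 'S_n) : {set 'S_n} :=
  [set t : 'S_n | [exists k : 'I_n, pseq t == rot k (pseq s)]].

Definition cyc_avoids (n : nat) (s : 'S_n) : bool :=
  [forall k : 'I_n.+1,
     ~~ has_consec_inc (rot k (pseq s)) && ~~ has_consec_dec (rot k (pseq s))].

Definition Av_cyc (n : nat) : {set {set 'S_n}} :=
  [set cyc_class s | s in [pred s : 'S_n | cyc_avoids s]].

Definition updown (s : seq nat) : bool :=
  all (fun i => if odd i then nth 0 s i > nth 0 s i.+1 else nth 0 s i < nth 0 s i.+1)
      (iota 0 (size s).-1).

Definition U (m : nat) : nat := #|[set s : 'S_m | updown (pseq s)]|.

(* Main.v *)
Require Import Defs.
From mathcomp Require Import all_boot all_order all_fingroup.
From mathcomp Require Import zify.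
Set Implicit Arguments. Unset Strict Implicit. Unset Printing Implicit Defensive.

Lemma nth_rotm (p : seq nat) k j : k <= size p -> j < size p ->
  nth 0 (rot k p) j = nth 0 p ((k + j) %% size p).
Proof.
move=> hk hj; rewrite /rot nth_cat size_drop.
case: ltnP => h.
  by rewrite nth_drop modn_small //; lia.
rewrite nth_take; last by lia.
have e : k + j = (j - (size p - k)) + size p by lia.
by rewrite e modnDr modn_small //; lia.
Qed.

Lemma modS_eq n i : 0 < n -> i.+1 %% n = (i %% n).+1 %% n.
Proof. by move=> h; rewrite -addn1 -modnDml addn1. Qed.

Lemma modS_ne n i : 2 <= n -> i %% n != i.+1 %% n.
Proof.
move=> h; rewrite modS_eq; last lia.
have : i %% n < n by apply: ltn_pmod; lia.
case: (ltngtP (i %% n).+1 n) => [h1 _|//|h1 _].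
  by rewrite (modn_small h1); lia.
by rewrite h1 modnn; lia.
Qed.

Lemma modS1 x n : (x %% n).+1 %% n = x.+1 %% n.
Proof. by rewrite -addn1 modnDml addn1. Qed.
Lemma modS2 x n : (x %% n).+2 %% n = x.+2 %% n.
Proof. by rewrite -addn2 modnDml addn2. Qed.

Definition upp (p : seq nat) i := nth 0 p (i %% size p) < nth 0 p (i.+1 %% size p).

Definition Pav (q : seq nat) := ~~ has_consec_inc q && ~~ has_consec_dec q.

Lemma small_Pav q : size q <= 2 -> Pav q.
Proof.
move=> h; rewrite /Pav /has_consec_inc /has_consec_dec.
by have -> : size q - 2 = 0 by lia.
Qed.

Lemma alt_char (p : seq nat) : 3 <= size p -> uniq p ->
  (forall k, k <= size p -> Pav (rot k p)) <-> (forall i, i < size p -> upp p i != upp p i.+1).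
Proof.
move=> h3 hu.
have dist : forall i, nth 0 p (i %% size p) != nth 0 p (i.+1 %% size p).
  by move=> i; rewrite nth_uniq ?ltn_pmod //; try lia; apply: modS_ne; lia.
have key : forall i, i < size p ->
   (~~ ((nth 0 p (i %% size p) < nth 0 p (i.+1 %% size p)) && (nth 0 p (i.+1 %% size p) < nth 0 p (i.+2 %% size p)))
   && ~~ ((nth 0 p (i %% size p) > nth 0 p (i.+1 %% size p)) && (nth 0 p (i.+1 %% size p) > nth 0 p (i.+2 %% size p))))
   = (upp p i != upp p i.+1).
  move=> i hi; move: (dist i) (dist i.+1); rewrite /upp.
  move: (nth 0 p (i %% size p)) (nth 0 p (i.+1 %% size p)) (nth 0 p (i.+2 %% size p)) => a b c h1 h2.
  case: (ltngtP a b) h1 => hab h1; case: (ltngtP b c) h2 => hbc h2 //=;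
    by [rewrite hab eqxx in h1 | rewrite hbc eqxx in h2].
split.
  move=> H i hi; rewrite -key //.
  have := H i (ltnW hi); rewrite /Pav /has_consec_inc /has_consec_dec size_rot.
  case/andP => /hasPn H1 /hasPn H2.
  have m0 : 0 \in iota 0 (size p - 2) by rewrite mem_iota; lia.
  have := H1 _ m0; have := H2 _ m0.
  rewrite !nth_rotm ?(ltnW hi) //; try lia.
  by rewrite !addn0 !addn1 !addn2 (modn_small hi) => -> ->.
move=> H k hk; rewrite /Pav /has_consec_inc /has_consec_dec size_rot.
apply/andP; split; apply/hasPn => j; rewrite mem_iota => /andP [_ hj];
  rewrite !nth_rotm //; try lia;
  have := H ((k + j) %% size p) (ltn_pmod _ (ltnW (ltnW h3)));
  rewrite -key ?ltn_pmod //; try lia.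
all: by rewrite modn_mod modS1 modS2 !addnS; case/andP.
Qed.


Lemma upp_per p : 0 < size p -> upp p (size p) = upp p 0.
Proof. by move=> h; rewrite /upp modnn mod0n -[(size p).+1]addn1 modnDl. Qed.

Lemma alt_formula p : 0 < size p -> (forall i, i < size p -> upp p i != upp p i.+1) ->
  forall i, i <= size p -> upp p i = upp p 0 (+) odd i.
Proof.
move=> h0 H; elim => [|i IH] hi; first by rewrite addbF.
have := H i hi; rewrite IH ?(ltnW hi) //= => /negPf.
by case: (upp p i.+1); case: (upp p 0); case: (odd i).
Qed.

Lemma alt_odd p : 0 < size p -> (forall i, i < size p -> upp p i != upp p i.+1) -> ~~ odd (size p).
Proof.
move=> h0 H; have := alt_formula h0 H (leqnn _); rewrite upp_per //.
by case: (upp p 0); case: (odd _).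
Qed.

Lemma alt_from_formula p b : (forall i, i <= size p -> upp p i = b (+) odd i) ->
  forall i, i < size p -> upp p i != upp p i.+1.
Proof.
move=> H i hi; rewrite !H ?(ltnW hi) //=.
by move: (b); case; case: (odd i).
Qed.

Lemma even_char (q : seq nat) m : size q = m -> odd m -> uniq q -> all (fun x => x < m) q ->
  (forall i, i < size (rcons q m) -> upp (rcons q m) i != upp (rcons q m) i.+1)
  <-> updown q.
Proof.
move=> sq om uq aq.
set p := rcons q m.
have sp : size p = m.+1 by rewrite size_rcons sq.
have m1 : 0 < m by case: (m) om.
have nthp : forall i, i < m -> nth 0 p i = nth 0 q i.
  by move=> i hi; rewrite nth_rcons sq hi.
have nthm : nth 0 p m = m by rewrite nth_rcons sq ltnn eqxx.
have qlt : forall i, i < m -> nth 0 q i < m.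
  by move=> i hi; apply: (allP aq); rewrite mem_nth // sq.
have qne : forall i, i.+1 < m -> nth 0 q i != nth 0 q i.+1.
  by move=> i hi; rewrite nth_uniq ?sq //; lia.
have uppm : upp p m = false.
  rewrite /upp sp modnn modn_small // nthm nthp //.
  by apply/negbTE; rewrite -leqNgt ltnW // qlt.
have uppi : forall i, i.+1 < m -> upp p i = (nth 0 q i < nth 0 q i.+1).
  by move=> i hi; rewrite /upp sp !modn_small ?nthp //; lia.
have uppm1 : upp p m.-1 = true.
  rewrite /upp sp !modn_small ?prednK ?nthm ?nthp ?qlt //; lia.
split.
  move=> H.
  have F := @alt_formula p (ltac:(by rewrite sp)) H; rewrite sp in F.
  have b1 : upp p 0 = true.
    by move: (F m (leqnSn _)); rewrite uppm om; case: (upp p 0).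
  apply/allP => i; rewrite mem_iota => /andP [_ hi].
  have hi' : i.+1 < m by lia.
  move: (F i ltac:(lia)); rewrite uppi // b1 => E.
  have := qne i hi'.
  by case: (odd i) E => /= E; lia.
move=> U.
have upi : forall i, i.+1 < m -> upp p i = true (+) odd i.
  move=> i hi; rewrite uppi //; move/allP: U => /(_ i); rewrite mem_iota.
  move=> /(_ ltac:(lia)); have := qne i hi.
  by case: (odd i) => /= h1 h2; lia.
have upm : forall i, i <= m -> upp p i = true (+) odd i.
  move=> i hi; case: (ltngtP i.+1 m) => h; first exact: upi.
    have -> : i = m by lia.
    by rewrite uppm om.
  have -> : i = m.-1 by lia.
  rewrite uppm1; have : odd m.-1 = false by move: om; case: (m) m1 => //= k _; case: (odd k).
  by move=> ->.
apply: (alt_from_formula (b:=true)) => i; rewrite sp => hi.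
have [h|h] : i <= m \/ i = m.+1 by lia.
  exact: upm.
rewrite h; have -> : upp p m.+1 = upp p 0 by rewrite -sp upp_per ?sp.
by rewrite upm //= om.
Qed.


Lemma size_pseq n (s : 'S_n) : size (pseq s) = n.
Proof. by rewrite /pseq size_map size_enum_ord. Qed.

Lemma nth_pseq n (s : 'S_n) (i : 'I_n) : nth 0 (pseq s) i = s i.
Proof.
by rewrite /pseq (nth_map i) ?size_enum_ord // nth_ord_enum.
Qed.

Lemma pseq_inj n : injective (@pseq n).
Proof.
move=> s t E; apply/permP => i; apply: val_inj.
by have := congr1 (fun q => nth 0 q i) E; rewrite /= !nth_pseq.
Qed.

Lemma pseq_uniq n (s : 'S_n) : uniq (pseq s).
Proof.
rewrite /pseq map_inj_uniq ?enum_uniq //.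
by move=> i j /val_inj /perm_inj.
Qed.

Lemma pseq_lt n (s : 'S_n) : all (fun x => x < n) (pseq s).
Proof. by apply/allP => x /mapP [i _ ->]; apply: ltn_ord. Qed.

Lemma cyc_avoidsE n (s : 'S_n) :
  cyc_avoids s <-> (forall k, k <= size (pseq s) -> Pav (rot k (pseq s))).
Proof.
rewrite size_pseq; split.
  by move/forallP => H k hk; have := H (Ordinal (hk : k < n.+1)).
by move=> H; apply/forallP => k; apply: H; rewrite -ltnS.
Qed.

Lemma pseq_lift m (t : 'S_m) :
  pseq (lift_perm ord_max ord_max t : 'S_m.+1) = rcons (pseq t) m.
Proof.
apply: (@eq_from_nth _ 0); first by rewrite size_rcons !size_pseq.
rewrite size_pseq => i hi.
rewrite -[i]/(nat_of_ord (Ordinal hi)) nth_pseq /= nth_rcons size_pseq.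
case: ltngtP => h.
- have -> : Ordinal hi = lift ord_max (Ordinal h) by apply: val_inj; rewrite /= /bump leqNgt h.
  by rewrite lift_perm_lift lift_max -[i]/(nat_of_ord (Ordinal h)) nth_pseq.
- lia.
- have -> : Ordinal hi = ord_max by apply: val_inj; rewrite /= h.
  by rewrite lift_perm_id.
Qed.

Lemma key_even m (t : 'S_m) : odd m ->
  cyc_avoids (lift_perm ord_max ord_max t : 'S_m.+1) = updown (pseq t).
Proof.
move=> om.
have [m1|m3] : m = 1 \/ 3 <= m.+1 by case: m om t => [|[|k]] //= _ _; [left|right].
  subst m; rewrite /updown size_pseq /=.
  apply/cyc_avoidsE => k _; apply: small_Pav; by rewrite size_rot size_pseq.
apply/idP/idP.
  move/cyc_avoidsE; rewrite pseq_lift.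
  rewrite alt_char ?size_rcons ?size_pseq ?rcons_uniq //; last first.
    by rewrite pseq_uniq andbT; apply/negP => /(allP (pseq_lt t)); rewrite ltnn.
  move=> H; apply/(even_char (size_pseq t) om (pseq_uniq t) (pseq_lt t)).
  by rewrite size_rcons size_pseq.
move=> U; apply/cyc_avoidsE; rewrite pseq_lift.
apply/alt_char; rewrite ?size_rcons ?size_pseq ?rcons_uniq //.
  by rewrite pseq_uniq andbT; apply/negP => /(allP (pseq_lt t)); rewrite ltnn.
have := (even_char (size_pseq t) om (pseq_uniq t) (pseq_lt t)).2 U.
by rewrite size_rcons size_pseq.
Qed.

Lemma odd_none n (s : 'S_n) : odd n -> 3 <= n -> ~~ cyc_avoids s.
Proof.
move=> on n3; apply/negP => /cyc_avoidsE.
rewrite alt_char ?size_pseq ?pseq_uniq // => H.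
have H' : forall i, i < size (pseq s) -> upp (pseq s) i != upp (pseq s) i.+1.
  by rewrite size_pseq.
have := @alt_odd (pseq s) (ltac:(by rewrite size_pseq; lia)) H'.
by rewrite size_pseq on.
Qed.


Section Rot.
Variable m : nat.
Local Notation n := m.+1.
Local Open Scope group_scope.

Definition rr : 'S_n := perm (@ordS_inj n).

Lemma pseq_r (s : 'S_n) : pseq (rr * s) = rot 1 (pseq s).
Proof.
apply: (@eq_from_nth _ 0); first by rewrite size_rot !size_pseq.
rewrite size_pseq => i hi.
rewrite -[i]/(nat_of_ord (Ordinal hi)) nth_pseq permM permE nth_rotm ?size_pseq //.
by rewrite -[(1 + _) %% _]/(nat_of_ord (ordS (Ordinal hi))) nth_pseq.
Qed.

Lemma pseq_rk (s : 'S_n) k : k <= n -> pseq (rr ^+ k * s) = rot k (pseq s).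
Proof.
elim: k => [|k IH] hk; first by rewrite expg0 mul1g rot0.
by rewrite expgS -mulgA pseq_r IH ?(ltnW hk) // -[k.+1]add1n rotD ?size_pseq ?add1n.
Qed.

Lemma rr_n : rr ^+ n = 1.
Proof.
apply: (mulIg 1); rewrite mul1g; apply: pseq_inj.
by rewrite pseq_rk // rot_oversize // size_pseq.
Qed.

Lemma cyc_classE (s : 'S_n) : cyc_class s = <[rr]> :* s.
Proof.
apply/setP => t; rewrite inE; apply/existsP/rcosetP.
  case=> k /eqP E; exists (rr ^+ k); first exact: mem_cycle.
  by apply: pseq_inj; rewrite pseq_rk // ltnW.
case=> h /cycleP [i ->] ->.
exists (Ordinal (ltn_pmod i (ltn0Sn m))).
by rewrite -(expg_mod _ rr_n) pseq_rk //= ltnW // ltn_pmod.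
Qed.

Lemma avoids_rk (s : 'S_n) k : k <= n -> cyc_avoids s -> cyc_avoids (rr ^+ k * s).
Proof.
move=> hk /cyc_avoidsE H; apply/cyc_avoidsE => j _.
by rewrite pseq_rk // rot_rot_add; apply: H; apply: leq_rot_add.
Qed.

End Rot.


Lemma count_av m : #|Av_cyc m.+1| =
  #|[set t : 'S_m | cyc_avoids (lift_perm ord_max ord_max t : 'S_m.+1)]|.
Proof.
set B := [set s : 'S_m.+1 | cyc_avoids s && (s ord_max == ord_max)].
have E1 : Av_cyc m.+1 = (@cyc_class m.+1) @: B.
  apply/setP => X; apply/imsetP/imsetP => [[s hs ->]|[s hs ->]].
    set j := (s^-1)%g ord_max.
    have hk : j.+1 <= m.+1 by apply: ltn_ord.
    exists ((rr m ^+ j.+1) * s)%g.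
      rewrite inE avoids_rk //=.
      have Hn := nth_pseq ((rr m ^+ j.+1) * s)%g ord_max.
      rewrite pseq_rk // nth_rotm ?size_pseq // in Hn.
      apply/eqP/ord_inj; rewrite -Hn /=.
      have -> : (j.+1 + m) %% m.+1 = j.
        by rewrite addSn -addnS modnDr modn_small.
      by rewrite nth_pseq permKV.
    by rewrite !cyc_classE rcosetM (rcoset_id (mem_cycle _ _)).
  exists s => //; rewrite inE in hs; by case/andP: hs.
have E2 : {in B &, injective (@cyc_class m.+1)}.
  move=> s s' hs hs' E.
  have : s' \in cyc_class s'.
    by rewrite inE; apply/existsP; exists ord0; rewrite rot0.
  rewrite -E inE => /existsP [k /eqP Ek].
  rewrite !inE in hs hs'; case/andP: hs => _ /eqP hs; case/andP: hs' => _ /eqP hs'.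
  have e1 : nth 0 (pseq s') m = m by rewrite (nth_pseq s' ord_max) hs'.
  have e2 : nth 0 (pseq s) m = m by rewrite (nth_pseq s ord_max) hs.
  have h : nth 0 (pseq s) ((k + m) %% m.+1) == nth 0 (pseq s) m.
    have := @nth_rotm (pseq s) k m; rewrite size_pseq => <-; try by [apply: ltnW | ].
    by rewrite -Ek e1 e2.
  move: h; rewrite (nth_uniq 0 _ _ (pseq_uniq s)) ?size_pseq ?ltn_pmod // => /eqP.
  case: k Ek => [[|k] hk] Ek /=.
    by move=> _; apply: pseq_inj; rewrite Ek rot0.
  by rewrite addSn -addnS modnDr modn_small //; lia.
have E3 : B = (fun t : 'S_m => lift_perm ord_max ord_max t) @:
    [set t : 'S_m | cyc_avoids (lift_perm ord_max ord_max t : 'S_m.+1)].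
  apply/setP => s; rewrite inE; apply/andP/imsetP.
    case=> hs /eqP hm.
    pose ulsf i (u : 'S_m.+1) k := odflt k (unlift (u i) (u (lift i k))).
    have ulsfK i (u : 'S_m.+1) k: lift (u i) (ulsf i u k) = u (lift i k).
      rewrite /ulsf; have:= neq_lift i k.
      by rewrite -(can_eq (permK u)) => /unlift_some[] ? ? ->.
    have inj_ulsf: injective (ulsf ord_max s).
      apply: can_inj (ulsf (s ord_max) s^-1%g) _ => k'.
      by rewrite {1}/ulsf ulsfK !permK liftK.
    have El : lift_perm ord_max ord_max (perm inj_ulsf) = s.
      apply/permP => k; case: (unliftP ord_max k) => [k'|] ->.
        by rewrite lift_perm_lift permE -ulsfK hm.
      by rewrite lift_perm_id hm.
    by exists (perm inj_ulsf); rewrite ?inE El.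
  case=> t ht ->; rewrite inE in ht; split => //.
  by rewrite lift_perm_id.
rewrite E1 card_in_imset // E3 card_imset //.
move=> t t' Et; apply/permP => i; apply: (@lift_inj _ (@ord_max m)).
by rewrite -!(lift_perm_lift ord_max ord_max) Et.
Qed.


Theorem proposition4p2 (n : nat) : 1 <= n ->
  #|Av_cyc n| = (if n == 1 then 1 else if odd n then 0 else U n.-1).
Proof.
case: n => [//|m] _; rewrite count_av /=.
case: m => [|m].
  rewrite /=; have -> : [set t : 'S_0 | cyc_avoids (lift_perm ord_max ord_max t : 'S_1)] = setT.
    apply/setP => t; rewrite !inE; apply/cyc_avoidsE => k _.
    by apply: small_Pav; rewrite size_rot size_pseq.
  by rewrite cardsT card_Sn.
rewrite eqSS /=.
case om: (odd m).
  have -> : [set t : 'S_m.+1 | cyc_avoids (lift_perm ord_max ord_max t : 'S_m.+2)] = set0.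
    apply/setP => t; rewrite !inE; apply/negbTE/odd_none; rewrite /= ?om //.
    by case: m om t => [|k].
  by rewrite cards0.
rewrite /U; apply: eq_card => t; rewrite !inE key_even //= om.
by [].
Qed.
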